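(* Let $N^{[0]}$ be a $C^0$ net on the grid $T^{[0]}$ with lines $s^{[0]}_i=t^{[0]}_i=i$, $i\in\mathbb{Z}$, and let $N^{[k]}$, $k\ge0$, be the nets generated from $N^{[0]}$ by the corner cutting algorithm for nets of functions (described in the context) with arbitrary weights $\boldsymbol{\gamma}^{[s],[k]},\boldsymbol{\gamma}^{[t],[k]}\in\mathscr{W}$. If $N^{[0]}$ has the BMSDD property with constant $L$, then $N^{[k]}$ has the BMSDD property with constant $3^kL$ for every $k\ge0$.
   Context: $\mathscr{W}$ is the set of pairs $(\boldsymbol{\alpha},\boldsymbol{\beta})$ of real bi-infinite sequences with $\inf_i\min\{\alpha_i,1-\beta_i,\beta_i-\alpha_i\}>0$. For strictly increasing bi-infinite real sequences $(s_i)$, $(t_j)$, unbounded above and below, the grid is $T=\bigcup_i\{s_i\}\times\mathbb{R}\cup\bigcup_j\mathbb{R}\times\{t_j\}$. A net $N(T)$ is a function on $T$ with values in $\mathbb{R}^m$; it is $C^0$ if all u-functions $s\mapsto N(s,t_j)$, $t\mapsto N(s_i,t)$ are continuous. The piecewise Coons patch $\mathcal{C}(N)$ is defined on each rectangle $[s_i,s_{i+1}]\times[t_j,t_{j+1}]$, with $h_1=s_{i+1}-s_i$, $h_2=t_{j+1}-t_j$, by $\mathcal{C}(N)(s,t)=\frac{s_{i+1}-s}{h_1}N(s_i,t)+\frac{s-s_i}{h_1}N(s_{i+1},t)+\frac{t_{j+1}-t}{h_2}N(s,t_j)+\frac{t-t_j}{h_2}N(s,t_{j+1})-B(s,t)$,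 with $B(s,t)=\frac{s_{i+1}-s}{h_1}\big(\frac{t_{j+1}-t}{h_2}N(s_i,t_j)+\frac{t-t_j}{h_2}N(s_i,t_{j+1})\big)+\frac{s-s_i}{h_1}\big(\frac{t_{j+1}-t}{h_2}N(s_{i+1},t_j)+\frac{t-t_j}{h_2}N(s_{i+1},t_{j+1})\big)$. Algorithm: given $N^{[k]}$ on grid $T^{[k]}$ with lines $s^{[k]}_i,t^{[k]}_j$, set $s^{[k+1]}_{2i}=(1-\alpha^{[s],[k]}_i)s^{[k]}_i+\alpha^{[s],[k]}_is^{[k]}_{i+1}$, $s^{[k+1]}_{2i+1}=(1-\beta^{[s],[k]}_i)s^{[k]}_i+\beta^{[s],[k]}_is^{[k]}_{i+1}$, and analogously for $t^{[k+1]}$ with $\boldsymbol{\gamma}^{[t],[k]}=(\boldsymbol{\alpha}^{[t],[k]},\boldsymbol{\beta}^{[t],[k]})$; $T^{[k+1]}$ is the grid with these lines and $N^{[k+1]}=\mathcal{C}(N^{[k]})|_{T^{[k+1]}}$. For $\sigma_1\ne\sigma_2$, $\tau_1\ne\tau_2$, $[\sigma_1,\sigma_2;\tau_1,\tau_2]N=\frac{N(\sigma_1,\tau_1)+N(\sigma_2,\tau_2)-N(\sigma_2,\tau_1)-N(\sigma_1,\tau_2)}{(\sigma_1-\sigma_2)(\tau_1-\tau_2)}$; a net on a grid has the BMSDD property with constant $L$ if $\|[\sigma_1,\sigma_2;\tau_1,\tau_2]N\|_\infty\le L$ whenever all four points $(\sigma_i,\tau_j)$ lie on the grid. *)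

(* Defs.v *)
From Stdlib Require Import Reals ZArith Lra.
Open Scope R_scope.

(* A net with values in R^m is represented as N : R -> R -> nat -> R,
   N s t c being the c-th coordinate (only c < m is relevant; only points
   of the grid are relevant). *)
Definition net := R -> R -> nat -> R.

Definition in_W (a b : Z -> R) : Prop :=
  exists d : R, 0 < d /\
    forall i : Z, d <= a i /\ d <= 1 - b i /\ d <= b i - a i.

(* grid lines at level k generated by the algorithm from s^[0]_i = i:
   s^[k+1]_{2i} = (1-a_i) s^[k]_i + a_i s^[k]_{i+1},
   s^[k+1]_{2i+1} = (1-b_i) s^[k]_i + b_i s^[k]_{i+1}.
   (Z.div2 is floor division by 2, so i = 2 (Z.div2 i) + Z.odd i.) *)
Fixpoint lines (a b : nat -> Z -> R) (k : nat) (i : Z) : R :=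
  match k with
  | O => IZR i
  | S k' =>
      let i' := Z.div2 i in
      let w := if Z.odd i then b k' i' else a k' i' in
      (1 - w) * lines a b k' i' + w * lines a b k' (i' + 1)%Z
  end.

Definition on_grid (sl tl : Z -> R) (s t : R) : Prop :=
  (exists i, s = sl i) \/ (exists j, t = tl j).

Definition coons (N : net) (s0 s1 t0 t1 s t : R) (c : nat) : R :=
  let h1 := s1 - s0 in
  let h2 := t1 - t0 in
  let B := (s1 - s) / h1 * ((t1 - t) / h2 * N s0 t0 c + (t - t0) / h2 * N s0 t1 c)
         + (s - s0) / h1 * ((t1 - t) / h2 * N s1 t0 c + (t - t0) / h2 * N s1 t1 c) in
  (s1 - s) / h1 * N s0 t c + (s - s0) / h1 * N s1 t c
  + (t1 - t) / h2 * N s t0 c + (t - t0) / h2 * N s t1 c - B.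

(* N^[k+1] = C(N^[k]) restricted to T^[k+1]: at every point of T^[k+1],
   on every rectangle of T^[k] containing it, N^[k+1] equals the Coons patch. *)
Definition coons_step (N N' : net) (sl tl sl' tl' : Z -> R) : Prop :=
  forall (i j : Z) (s t : R) (c : nat),
    on_grid sl' tl' s t ->
    sl i <= s <= sl (i + 1)%Z -> tl j <= t <= tl (j + 1)%Z ->
    N' s t c = coons N (sl i) (sl (i + 1)%Z) (tl j) (tl (j + 1)%Z) s t c.

Definition C0_net (m : nat) (N : net) (sl tl : Z -> R) : Prop :=
  forall c : nat, (c < m)%nat ->
    (forall j : Z, continuity (fun s => N s (tl j) c)) /\
    (forall i : Z, continuity (fun t => N (sl i) t c)).

Definition divdiff (N : net) (s1 s2 t1 t2 : R) (c : nat) : R :=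
  (N s1 t1 c + N s2 t2 c - N s2 t1 c - N s1 t2 c) / ((s1 - s2) * (t1 - t2)).

Definition BMSDD (m : nat) (N : net) (sl tl : Z -> R) (L : R) : Prop :=
  forall s1 s2 t1 t2 : R, s1 <> s2 -> t1 <> t2 ->
    on_grid sl tl s1 t1 -> on_grid sl tl s1 t2 ->
    on_grid sl tl s2 t1 -> on_grid sl tl s2 t2 ->
    forall c : nat, (c < m)%nat -> Rabs (divdiff N s1 s2 t1 t2 c) <= L.

(* Main.v *)
Require Import Defs.
From Stdlib Require Import Reals ZArith.
Open Scope R_scope.
From Stdlib Require Import Lra Lia.

Definition interp (sl : Z -> R) (d : Z -> R) (i : Z) (x : R) : R :=
  (sl (i+1)%Z - x) / (sl (i+1)%Z - sl i) * d i + (x - sl i) / (sl (i+1)%Z - sl i) * d (i+1)%Z.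

Lemma sl_mono (sl : Z -> R) (Hinc : forall i, sl i < sl (i+1)%Z) :
  forall n i, sl i <= sl (i + Z.of_nat n)%Z.
Proof.
  induction n; intros i.
  - rewrite Z.add_0_r. lra.
  - rewrite Nat2Z.inj_succ. pose proof (IHn i). pose proof (Hinc (i + Z.of_nat n)%Z).
    replace (i + Z.succ (Z.of_nat n))%Z with (i + Z.of_nat n + 1)%Z by lia. lra.
Qed.

Lemma interp_same sl d K i x1 x2 (Hinc : forall i, sl i < sl (i+1)%Z)
  (Hd : forall i, Rabs (d (i+1)%Z - d i) <= K * (sl (i+1)%Z - sl i)) :
  Rabs (interp sl d i x1 - interp sl d i x2) <= K * Rabs (x1 - x2).
Proof.
  pose proof (Hinc i) as Hi. pose proof (Hd i) as Hdi.
  set (h := sl (i+1)%Z - sl i) in *.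
  assert (E : interp sl d i x1 - interp sl d i x2 = (x1 - x2) * ((d (i+1)%Z - d i) / h)).
  { unfold interp. fold h. field. unfold h; lra. }
  rewrite E, Rabs_mult, Rmult_comm. apply Rmult_le_compat_r. apply Rabs_pos.
  unfold Rdiv. rewrite Rabs_mult, Rabs_inv, (Rabs_right h) by (unfold h; lra).
  apply (Rmult_le_reg_r h). unfold h; lra.
  rewrite Rmult_assoc, Rinv_l by (unfold h; lra). lra.
Qed.

Lemma interp_left sl d i : sl i < sl (i+1)%Z -> interp sl d i (sl (i+1)%Z) = d (i+1)%Z.
Proof. intros H. unfold interp. field. lra. Qed.
Lemma interp_right sl d i : sl i < sl (i+1)%Z -> interp sl d i (sl i) = d i.
Proof. intros H. unfold interp. field. lra. Qed.

Lemma lip_aux sl d K (Hinc : forall i, sl i < sl (i+1)%Z)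
  (Hd : forall i, Rabs (d (i+1)%Z - d i) <= K * (sl (i+1)%Z - sl i)) :
  forall n i1 x1 x2, sl i1 <= x1 <= sl (i1+1)%Z ->
    sl (i1 + Z.of_nat n)%Z <= x2 <= sl (i1 + Z.of_nat n + 1)%Z ->
    Rabs (interp sl d i1 x1 - interp sl d (i1 + Z.of_nat n)%Z x2) <= K * Rabs (x1 - x2).
Proof.
  induction n; intros i1 x1 x2 H1 H2.
  - rewrite Z.add_0_r. apply interp_same; auto.
  - set (s := sl (i1+1)%Z).
    assert (IH := IHn (i1+1)%Z s x2).
    replace (i1 + 1 + Z.of_nat n)%Z with (i1 + Z.of_nat (S n))%Z in IH by lia.
    replace (i1 + 1 + Z.of_nat n + 1)%Z with (i1 + Z.of_nat (S n) + 1)%Z in IH by lia.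
    specialize (IH ltac:(pose proof (Hinc (i1+1)%Z); unfold s; lra) H2).
    assert (B := interp_same sl d K i1 x1 s Hinc Hd).
    rewrite interp_left in B by auto.
    rewrite <- (interp_right sl d (i1+1)%Z) in B by auto. fold s in B.
    pose proof (sl_mono sl Hinc n (i1+1)%Z) as M.
    replace (i1 + 1 + Z.of_nat n)%Z with (i1 + Z.of_nat (S n))%Z in M by lia.
    fold s in M.
    assert (E: interp sl d i1 x1 - interp sl d (i1 + Z.of_nat (S n)) x2 =
      (interp sl d i1 x1 - interp sl d (i1 + 1) s) + (interp sl d (i1 + 1) s - interp sl d (i1 + Z.of_nat (S n)) x2)) by ring.
    rewrite E. eapply Rle_trans. apply Rabs_triang.
    assert (x1 <= s) by (unfold s; lra).     rewrite (Rabs_left1 (x1 - x2)) by lra.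
    rewrite (Rabs_left1 (x1 - s)) in B by lra.
    rewrite (Rabs_left1 (s - x2)) in IH by lra.
    lra.
Qed.

Lemma lip sl d K (Hinc : forall i, sl i < sl (i+1)%Z)
  (Hd : forall i, Rabs (d (i+1)%Z - d i) <= K * (sl (i+1)%Z - sl i)) :
  forall i1 i2 x1 x2, sl i1 <= x1 <= sl (i1+1)%Z -> sl i2 <= x2 <= sl (i2+1)%Z ->
    Rabs (interp sl d i1 x1 - interp sl d i2 x2) <= K * Rabs (x1 - x2).
Proof.
  intros i1 i2 x1 x2 H1 H2.
  destruct (Z.le_ge_cases i1 i2) as [L|L].
  - replace i2 with (i1 + Z.of_nat (Z.to_nat (i2 - i1)))%Z in * by lia.
    apply lip_aux; auto.
  - replace i1 with (i2 + Z.of_nat (Z.to_nat (i1 - i2)))%Z in * by lia.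
    rewrite Rabs_minus_sym, (Rabs_minus_sym x1). apply lip_aux; auto.
Qed.

Lemma div2_even (i : Z) : Z.div2 (2 * i) = i.
Proof. pose proof (Zdiv2_odd_eqn (2*i)) as H. rewrite Z.odd_even in H. lia. Qed.
Lemma div2_oddZ (i : Z) : Z.div2 (2 * i + 1) = i.
Proof. pose proof (Zdiv2_odd_eqn (2*i+1)) as H. rewrite Z.odd_odd in H. lia. Qed.

Lemma lines_even a b k i :
  lines a b (S k) (2*i) = (1 - a k i) * lines a b k i + a k i * lines a b k (i+1).
Proof. change (lines a b (S k) (2*i)) with
  ((1 - (if Z.odd (2*i) then b k (Z.div2 (2*i)) else a k (Z.div2 (2*i)))) * lines a b k (Z.div2 (2*i)) +
   (if Z.odd (2*i) then b k (Z.div2 (2*i)) else a k (Z.div2 (2*i))) * lines a b k (Z.div2 (2*i) + 1)).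
  rewrite Z.odd_even, div2_even. reflexivity. Qed.

Lemma lines_odd a b k i :
  lines a b (S k) (2*i+1) = (1 - b k i) * lines a b k i + b k i * lines a b k (i+1).
Proof. change (lines a b (S k) (2*i+1)) with
  ((1 - (if Z.odd (2*i+1) then b k (Z.div2 (2*i+1)) else a k (Z.div2 (2*i+1)))) * lines a b k (Z.div2 (2*i+1)) +
   (if Z.odd (2*i+1) then b k (Z.div2 (2*i+1)) else a k (Z.div2 (2*i+1))) * lines a b k (Z.div2 (2*i+1) + 1)).
  rewrite Z.odd_odd, div2_oddZ. reflexivity. Qed.

Lemma W_facts a b : in_W a b -> forall i, 0 < a i /\ a i < b i /\ b i < 1.
Proof. intros [d [Hd H]] i. destruct (H i) as [H1 [H2 H3]]. lra. Qed.

Lemma lines_incr a b (HW : forall k, in_W (a k) (b k)) :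
  forall k i, lines a b k i < lines a b k (i+1).
Proof.
  induction k; intros i.
  - simpl. rewrite plus_IZR. lra.
  - pose proof (Zdiv2_odd_eqn i) as Hi. revert Hi.
    set (q := Z.div2 i). destruct (Z.odd i); intros Hi; rewrite Hi.
    + replace (2*q+1+1)%Z with (2*(q+1))%Z by lia.
      rewrite lines_odd, lines_even.
      pose proof (IHk q). pose proof (IHk (q+1)%Z).
      destruct (W_facts _ _ (HW k) q) as [A1 [A2 A3]].
      destruct (W_facts _ _ (HW k) (q+1)%Z) as [B1 [B2 B3]].
      assert (0 < (1 - b k q) * (lines a b k (q+1) - lines a b k q)) by (apply Rmult_lt_0_compat; lra).
      assert (0 < a k (q+1)%Z * (lines a b k (q+1+1) - lines a b k (q+1))) by (apply Rmult_lt_0_compat; lra).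
      lra.
    + rewrite Z.add_0_r. rewrite lines_even, lines_odd.
      pose proof (IHk q).
      destruct (W_facts _ _ (HW k) q) as [A1 [A2 A3]].
      assert (0 < (b k q - a k q) * (lines a b k (q+1) - lines a b k q)) by (apply Rmult_lt_0_compat; lra).
      lra.
Qed.

Lemma lines_cover a b (HW : forall k, in_W (a k) (b k)) :
  forall k s, exists i, lines a b k i <= s <= lines a b k (i+1).
Proof.
  induction k; intros s.
  - exists (up s - 1)%Z. simpl. destruct (archimed s) as [H1 H2].
    rewrite minus_IZR. replace (up s - 1 + 1)%Z with (up s) by lia. lra.
  - destruct (IHk s) as [q Hq].
    pose proof (lines_incr a b HW k (q-1)%Z) as I0.
    pose proof (lines_incr a b HW k q) as I1.
    pose proof (lines_incr a b HW k (q+1)%Z) as I2.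
    replace (q-1+1)%Z with q in I0 by lia.
    destruct (W_facts _ _ (HW k) q) as [A1 [A2 A3]].
    destruct (W_facts _ _ (HW k) (q-1)%Z) as [B1 [B2 B3]].
    destruct (W_facts _ _ (HW k) (q+1)%Z) as [C1 [C2 C3]].
    destruct (Rle_dec s (lines a b (S k) (2*q))) as [Hs1|Hs1].
    + exists (2*(q-1)+1)%Z. replace (2*(q-1)+1+1)%Z with (2*q)%Z by lia.
      rewrite lines_odd. replace (q-1+1)%Z with q by lia. split; [|lra].
      assert (0 <= (1 - b k (q-1)%Z) * (lines a b k q - lines a b k (q-1))) by (apply Rmult_le_pos; lra).
      lra.
    + destruct (Rle_dec s (lines a b (S k) (2*q+1))) as [Hs2|Hs2].
      * exists (2*q)%Z. lra.
      * exists (2*q+1)%Z. replace (2*q+1+1)%Z with (2*(q+1))%Z by lia.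
        rewrite lines_even. split; [lra|].
        assert (0 <= a k (q+1)%Z * (lines a b k (q+1+1) - lines a b k (q+1))) by (apply Rmult_le_pos; lra).
        lra.
Qed.
Definition P1 (N : net) sl i (x t : R) c := interp sl (fun i => N (sl i) t c) i x.
Definition P2 (N : net) tl j (x t : R) c := interp tl (fun j => N x (tl j) c) j t.
Definition Bf (N : net) sl tl i j (x t : R) c :=
  interp sl (fun i' => interp tl (fun j' => N (sl i') (tl j') c) j t) i x.

Lemma coons_dec N sl tl i j x t c :
  coons N (sl i) (sl (i+1)%Z) (tl j) (tl (j+1)%Z) x t c =
  P1 N sl i x t c + P2 N tl j x t c - Bf N sl tl i j x t c.
Proof. unfold coons, P1, P2, Bf, interp. ring. Qed.

Lemma dd_num N s1 s2 t1 t2 c L : s1 <> s2 -> t1 <> t2 ->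
  Rabs (divdiff N s1 s2 t1 t2 c) <= L ->
  Rabs (N s1 t1 c + N s2 t2 c - N s2 t1 c - N s1 t2 c) <= L * Rabs (s1 - s2) * Rabs (t1 - t2).
Proof.
  intros H1 H2 H. unfold divdiff in H.
  set (n := N s1 t1 c + N s2 t2 c - N s2 t1 c - N s1 t2 c) in *.
  assert (Hx : s1 - s2 <> 0) by lra. assert (Hy : t1 - t2 <> 0) by lra.
  replace n with (n / ((s1 - s2) * (t1 - t2)) * ((s1 - s2) * (t1 - t2))) by (field; auto).
  rewrite Rabs_mult, Rabs_mult, Rmult_assoc. apply Rmult_le_compat_r; auto.
  apply Rmult_le_pos; apply Rabs_pos.
Qed.

Lemma fin_div n x y M : x <> 0 -> y <> 0 -> Rabs n <= M * Rabs x * Rabs y ->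
  Rabs (n / (x * y)) <= M.
Proof.
  intros Hx Hy H. unfold Rdiv. rewrite Rabs_mult, Rabs_inv, Rabs_mult.
  assert (0 < Rabs x) by (apply Rabs_pos_lt; auto).
  assert (0 < Rabs y) by (apply Rabs_pos_lt; auto).
  apply (Rmult_le_reg_r (Rabs x * Rabs y)). apply Rmult_lt_0_compat; auto.
  rewrite Rmult_assoc, Rinv_l. lra. apply Rgt_not_eq. apply Rmult_lt_0_compat; auto.
Qed.

Lemma step m (N N' : net) sl tl sl' tl' Lk
  (Hs : forall i, sl i < sl (i+1)%Z) (Ht : forall i, tl i < tl (i+1)%Z)
  (Cs : forall s, exists i, sl i <= s <= sl (i+1)%Z)
  (Ct : forall s, exists i, tl i <= s <= tl (i+1)%Z)
  (Hst : coons_step N N' sl tl sl' tl')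
  (HB : BMSDD m N sl tl Lk) : BMSDD m N' sl' tl' (3 * Lk).
Proof.
  intros s1 s2 t1 t2 Hs12 Ht12 G11 G12 G21 G22 c Hc.
  destruct (Cs s1) as [i1 I1]. destruct (Cs s2) as [i2 I2].
  destruct (Ct t1) as [j1 J1]. destruct (Ct t2) as [j2 J2].
  unfold divdiff.
  rewrite (Hst i1 j1 s1 t1 c G11 I1 J1), (Hst i1 j2 s1 t2 c G12 I1 J2),
          (Hst i2 j1 s2 t1 c G21 I2 J1), (Hst i2 j2 s2 t2 c G22 I2 J2).
  rewrite !coons_dec.
  apply fin_div; try lra.
  assert (A1 : Rabs (P1 N sl i1 s1 t1 c + P1 N sl i2 s2 t2 c - P1 N sl i2 s2 t1 c - P1 N sl i1 s1 t2 c)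
     <= Lk * Rabs (s1 - s2) * Rabs (t1 - t2)).
  { set (d := fun i => N (sl i) t1 c - N (sl i) t2 c).
    replace (P1 N sl i1 s1 t1 c + P1 N sl i2 s2 t2 c - P1 N sl i2 s2 t1 c - P1 N sl i1 s1 t2 c)
      with (interp sl d i1 s1 - interp sl d i2 s2) by (unfold d, P1, interp; ring).
    eapply Rle_trans. apply (lip sl d (Lk * Rabs (t1 - t2))); auto.
    - intros i. unfold d.
      assert (Hne : sl i <> sl (i+1)%Z) by (pose proof (Hs i); lra).
      pose proof (dd_num N _ _ t1 t2 c Lk Hne Ht12
        (HB _ _ _ _ Hne Ht12 (or_introl (ex_intro _ i eq_refl)) (or_introl (ex_intro _ i eq_refl))
          (or_introl (ex_intro _ (i+1)%Z eq_refl)) (or_introl (ex_intro _ (i+1)%Z eq_refl)) c Hc)) as H.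
      rewrite (Rabs_left1 (sl i - sl (i+1)%Z)) in H by (pose proof (Hs i); lra).
      replace (N (sl (i + 1)%Z) t1 c - N (sl (i + 1)%Z) t2 c - (N (sl i) t1 c - N (sl i) t2 c))
        with (- (N (sl i) t1 c + N (sl (i + 1)%Z) t2 c - N (sl (i + 1)%Z) t1 c - N (sl i) t2 c)) by ring.
      rewrite Rabs_Ropp. lra.
    - lra. }
  assert (A2 : Rabs (P2 N tl j1 s1 t1 c + P2 N tl j2 s2 t2 c - P2 N tl j1 s2 t1 c - P2 N tl j2 s1 t2 c)
     <= Lk * Rabs (s1 - s2) * Rabs (t1 - t2)).
  { set (e := fun j => N s1 (tl j) c - N s2 (tl j) c).
    replace (P2 N tl j1 s1 t1 c + P2 N tl j2 s2 t2 c - P2 N tl j1 s2 t1 c - P2 N tl j2 s1 t2 c)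
      with (interp tl e j1 t1 - interp tl e j2 t2) by (unfold e, P2, interp; ring).
    eapply Rle_trans. apply (lip tl e (Lk * Rabs (s1 - s2))); auto.
    - intros j. unfold e.
      assert (Hne : tl j <> tl (j+1)%Z) by (pose proof (Ht j); lra).
      pose proof (dd_num N s1 s2 _ _ c Lk Hs12 Hne
        (HB _ _ _ _ Hs12 Hne (or_intror (ex_intro _ j eq_refl)) (or_intror (ex_intro _ (j+1)%Z eq_refl))
          (or_intror (ex_intro _ j eq_refl)) (or_intror (ex_intro _ (j+1)%Z eq_refl)) c Hc)) as H.
      rewrite (Rabs_left1 (tl j - tl (j+1)%Z)) in H by (pose proof (Ht j); lra).
      replace (N s1 (tl (j + 1)%Z) c - N s2 (tl (j + 1)%Z) c - (N s1 (tl j) c - N s2 (tl j) c))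
        with (- (N s1 (tl j) c + N s2 (tl (j + 1)%Z) c - N s2 (tl j) c - N s1 (tl (j + 1)%Z) c)) by ring.
      rewrite Rabs_Ropp. lra.
    - right. ring. }
  assert (A3 : Rabs (Bf N sl tl i1 j1 s1 t1 c + Bf N sl tl i2 j2 s2 t2 c - Bf N sl tl i2 j1 s2 t1 c - Bf N sl tl i1 j2 s1 t2 c)
     <= Lk * Rabs (s1 - s2) * Rabs (t1 - t2)).
  { set (g := fun i j => N (sl i) (tl j) c).
    set (f := fun i => interp tl (g i) j1 t1 - interp tl (g i) j2 t2).
    replace (Bf N sl tl i1 j1 s1 t1 c + Bf N sl tl i2 j2 s2 t2 c - Bf N sl tl i2 j1 s2 t1 c - Bf N sl tl i1 j2 s1 t2 c)
      with (interp sl f i1 s1 - interp sl f i2 s2) by (unfold f, g, Bf, interp; ring).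
    eapply Rle_trans. apply (lip sl f (Lk * Rabs (t1 - t2))); auto.
    - intros i. unfold f.
      set (gg := fun j => g (i+1)%Z j - g i j).
      replace (interp tl (g (i + 1)%Z) j1 t1 - interp tl (g (i + 1)%Z) j2 t2 -
               (interp tl (g i) j1 t1 - interp tl (g i) j2 t2))
        with (interp tl gg j1 t1 - interp tl gg j2 t2) by (unfold gg, interp; ring).
      eapply Rle_trans. apply (lip tl gg (Lk * (sl (i+1)%Z - sl i))); auto.
      + intros j. unfold gg, g.
        assert (Hne : sl i <> sl (i+1)%Z) by (pose proof (Hs i); lra).
        assert (Hne' : tl j <> tl (j+1)%Z) by (pose proof (Ht j); lra).
        pose proof (dd_num N _ _ _ _ c Lk Hne Hne'
          (HB _ _ _ _ Hne Hne' (or_introl (ex_intro _ i eq_refl)) (or_introl (ex_intro _ i eq_refl))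
            (or_introl (ex_intro _ (i+1)%Z eq_refl)) (or_introl (ex_intro _ (i+1)%Z eq_refl)) c Hc)) as H.
        rewrite (Rabs_left1 (sl i - sl (i+1)%Z)) in H by (pose proof (Hs i); lra).
        rewrite (Rabs_left1 (tl j - tl (j+1)%Z)) in H by (pose proof (Ht j); lra).
        replace (N (sl (i + 1)%Z) (tl (j + 1)%Z) c - N (sl i) (tl (j + 1)%Z) c -
                 (N (sl (i + 1)%Z) (tl j) c - N (sl i) (tl j) c))
          with (N (sl i) (tl j) c + N (sl (i + 1)%Z) (tl (j + 1)%Z) c - N (sl (i + 1)%Z) (tl j) c - N (sl i) (tl (j + 1)%Z) c) by ring.
        lra.
      + right. ring.
    - right. ring. }
  replace (P1 N sl i1 s1 t1 c + P2 N tl j1 s1 t1 c - Bf N sl tl i1 j1 s1 t1 c +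
   (P1 N sl i2 s2 t2 c + P2 N tl j2 s2 t2 c - Bf N sl tl i2 j2 s2 t2 c) -
   (P1 N sl i2 s2 t1 c + P2 N tl j1 s2 t1 c - Bf N sl tl i2 j1 s2 t1 c) -
   (P1 N sl i1 s1 t2 c + P2 N tl j2 s1 t2 c - Bf N sl tl i1 j2 s1 t2 c))
   with ((P1 N sl i1 s1 t1 c + P1 N sl i2 s2 t2 c - P1 N sl i2 s2 t1 c - P1 N sl i1 s1 t2 c)
       + (P2 N tl j1 s1 t1 c + P2 N tl j2 s2 t2 c - P2 N tl j1 s2 t1 c - P2 N tl j2 s1 t2 c)
       - (Bf N sl tl i1 j1 s1 t1 c + Bf N sl tl i2 j2 s2 t2 c - Bf N sl tl i2 j1 s2 t1 c - Bf N sl tl i1 j2 s1 t2 c)) by ring.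
  eapply Rle_trans. apply Rabs_triang. rewrite Rabs_Ropp.
  eapply Rle_trans. apply Rplus_le_compat_r. apply Rabs_triang.
  lra.
Qed.

Theorem corollary3
  (m : nat) (L : R)
  (as_ bs at_ bt : nat -> Z -> R)
  (N : nat -> net)
  (HWs : forall k : nat, in_W (as_ k) (bs k))
  (HWt : forall k : nat, in_W (at_ k) (bt k))
  (HC0 : C0_net m (N O) (lines as_ bs O) (lines at_ bt O))
  (Hstep : forall k : nat,
      coons_step (N k) (N (S k))
        (lines as_ bs k) (lines at_ bt k)
        (lines as_ bs (S k)) (lines at_ bt (S k)))
  (HL : BMSDD m (N O) (lines as_ bs O) (lines at_ bt O) L) :
  forall k : nat,
    BMSDD m (N k) (lines as_ bs k) (lines at_ bt k) (3 ^ k * L).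
Proof.
  induction k.
  - replace (3 ^ 0 * L) with L by (simpl; ring). exact HL.
  - replace (3 ^ S k * L) with (3 * (3 ^ k * L)) by (simpl; ring).
    apply (step m (N k) (N (S k)) (lines as_ bs k) (lines at_ bt k)
                (lines as_ bs (S k)) (lines at_ bt (S k))); auto.
    + apply lines_incr; auto.
    + apply lines_incr; auto.
    + apply lines_cover; auto.
    + apply lines_cover; auto.
Qed.
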